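(* Let $p>3$ be a prime. Then the integral homology $\mathrm{Kh}_{alg}(p,\infty;\mathbb{Z})=H(A_p(\mathbb{Z}),d_2)$ contains a nonzero element of additive order $p$ in the bidegree with $q$-degree $2p+6$ and $t$-degree $2p$.
   Context: For a commutative ring $R$ and $n\ge1$, let $A_n(R)=R[x_0,\dots,x_{n-1}]\otimes_R\Lambda_R[\xi_0,\dots,\xi_{n-1}]$ be the free graded-commutative $R$-algebra on even generators $x_k$ and odd generators $\xi_k$. It is bigraded by declaring $x_k$ to have $q$-degree $2k+2$ and $t$-degree $2k$, and $\xi_k$ to have $q$-degree $2k+4$ and $t$-degree $2k+1$. Let $d_2$ be the unique $R$-linear odd derivation ($d_2(ab)=d_2(a)b+(-1)^{|a|}a\,d_2(b)$, $|a|$ = number of $\xi$'s mod 2) with $d_2(x_k)=0$ and $d_2(\xi_k)=\sum_{i=0}^{k}x_ix_{k-i}$; it preserves $q$-degree and lowers $t$-degree by 1. $\mathrm{Kh}_{alg}(n,\infty;R)=H(A_n(R),d_2)$. *)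

(* Defs.v *)
(* Concrete model of A_n(Z) = Z[x_0..x_{n-1}] (x) Lambda[xi_0..xi_{n-1}]
   as formal Z-linear combinations of monomials x^e xi_S, with xi_S the product of the
   xi_k, k in S, taken in increasing order of k. *)
From HB Require Import structures.
From mathcomp Require Import all_boot all_order all_algebra.
Set Implicit Arguments. Unset Strict Implicit. Unset Printing Implicit Defensive.
Import Order.TTheory GRing.Theory Num.Theory.
Local Open Scope ring_scope.

Definition mono (n : nat) := ({ffun 'I_n -> nat} * {set 'I_n})%type.

Definition elt (n : nat) := seq (int * mono n).

Definition coef n (f : elt n) (m : mono n) : int :=
  \sum_(t <- f) (if t.2 == m then t.1 else 0).

Definition eqA n (f g : elt n) : Prop := forall m, coef f m = coef g m.

Definition scaleA n (k : int) (f : elt n) : elt n := [seq (k * t.1, t.2) | t <- f].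

Definition qdeg n (m : mono n) : nat :=
  (\sum_(k < n) m.1 k * (2 * k + 2) + \sum_(k in m.2) (2 * k + 4))%N.
Definition tdeg n (m : mono n) : nat :=
  (\sum_(k < n) m.1 k * (2 * k) + \sum_(k in m.2) (2 * k + 1))%N.

Definition homog n (q t : nat) (f : elt n) : bool :=
  all (fun u => (qdeg u.2 == q) && (tdeg u.2 == t)) f.

Definition incx n (e : {ffun 'I_n -> nat}) (i : 'I_n) : {ffun 'I_n -> nat} :=
  [ffun k => (e k + (k == i))%N].

(* d_2 of a monomial x^e xi_S: Leibniz rule with sign (-1)^{#{s in S | s < j}},
   d_2(xi_j) = sum_{i=0}^{j} x_i x_{j-i}, and d_2(x_k) = 0 *)
Definition ord_subr n (j : 'I_n) (i : nat) : 'I_n :=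
  Ordinal (leq_ltn_trans (leq_subr i j) (ltn_ord j)).

Definition d2_mono n (m : mono n) : elt n :=
  flatten [seq [seq ((-1) ^+ #|[set s in m.2 | (s < j)%N]|,
                     (incx (incx m.1 i) (ord_subr j i), m.2 :\ j))
               | i : 'I_n <- enum 'I_n & (i <= j)%N]
          | j : 'I_n <- enum m.2].

Definition d2 n (f : elt n) : elt n :=
  flatten [seq scaleA u.1 (d2_mono u.2) | u <- f].

Definition is_cycle n (z : elt n) : Prop := eqA (d2 z) [::].
Definition is_boundary n (z : elt n) : Prop := exists w : elt n, eqA (d2 w) z.

(* Main.v *)
Require Import Defs.
From mathcomp Require Import all_boot all_order all_algebra zify.
Set Implicit Arguments. Unset Strict Implicit. Unset Printing Implicit Defensive.
Import Order.TTheory GRing.Theory Num.Theory.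
Local Open Scope ring_scope.

Lemma coef_cat n (f g : elt n) m : coef (f ++ g) m = coef f m + coef g m.
Proof. by rewrite /coef big_cat. Qed.
Lemma coef_flatten n (L : seq (elt n)) m : coef (flatten L) m = \sum_(f <- L) coef f m.
Proof. by rewrite /coef big_flatten. Qed.
Lemma coef_scale n k (f : elt n) m : coef (scaleA k f) m = k * coef f m.
Proof.
rewrite /coef /scaleA big_map mulr_sumr; apply: eq_bigr => t _ /=.
by case: ifP; rewrite ?mulr0.
Qed.
Lemma coef_d2 n (f : elt n) m : coef (d2 f) m = \sum_(u <- f) u.1 * coef (d2_mono u.2) m.
Proof. by rewrite /d2 coef_flatten big_map; apply: eq_bigr => u _; rewrite coef_scale. Qed.

Definition wsum n (e : {ffun 'I_n -> nat}) (g : 'I_n -> nat) : nat := (\sum_(k < n) e k * g k)%N.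
Definition Dg n (e : {ffun 'I_n -> nat}) : nat := wsum e (fun _ => 1%N).
Definition Wt n (e : {ffun 'I_n -> nat}) : nat := wsum e (fun k => val k).
Definition cnt n (e : {ffun 'I_n -> nat}) (v : nat) : nat := wsum e (fun k => nat_of_bool (val k == v)).
Definition delta n (i : 'I_n) : {ffun 'I_n -> nat} := [ffun k => nat_of_bool (k == i)].

Lemma wsum_incx n (e : {ffun 'I_n -> nat}) a g : wsum (incx e a) g = (wsum e g + g a)%N.
Proof.
rewrite /wsum -(big_pred1_eq addn a g) big_mkcond /= -big_split /=.
by apply: eq_bigr => k _; rewrite ffunE mulnDl; case: eqP => [->|]; rewrite ?mul1n ?mul0n ?addn0.
Qed.
Lemma wsum_delta n (i : 'I_n) g : wsum (delta i) g = g i.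
Proof.
rewrite /wsum -(big_pred1_eq addn i g) big_mkcond /=.
by apply: eq_bigr => k _; rewrite ffunE; case: eqP; rewrite ?mul1n ?mul0n.
Qed.

Definition psi' (n e0 e1 d w : nat) : int :=
  if (d == 3%N) && (w == n) then
    (if (0 < e0)%N then (if e1 == 0%N then -1 else 0) else e1%:Z) else 0.

Definition psi n (m : mono n) : int :=
  if m.2 == set0 then psi' n (cnt m.1 0) (cnt m.1 1) (Dg m.1) (Wt m.1) else 0.

Definition Phi n (f : elt n) : int := \sum_(t <- f) t.1 * psi t.2.

Lemma Phi_coef n (f : elt n) (s : seq (mono n)) : uniq s ->
  (forall t, t \in f -> t.2 \in s) -> Phi f = \sum_(m <- s) psi m * coef f m.
Proof.
move=> us sub; rewrite /Phi /coef.
under [RHS]eq_bigr => m _ do rewrite mulr_sumr.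
rewrite exchange_big /= [LHS]big_seq [RHS]big_seq; apply: eq_bigr => t tf.
rewrite (bigD1_seq t.2) ?sub //.
rewrite eqxx big1.
  by rewrite -[RHS]/(psi t.2 * t.1 + 0) addr0 mulrC.
move=> m ne.
by rewrite eq_sym (negbTE ne) mulr0.
Qed.

Lemma eqA_Phi n (f g : elt n) : eqA f g -> Phi f = Phi g.
Proof.
move=> e.
set s := undup (map snd (f ++ g)).
have us : uniq s by apply: undup_uniq.
rewrite (@Phi_coef _ f s) // ?(@Phi_coef _ g s) //.
- by apply: eq_bigr => m _; rewrite e.
- by move=> t tg; rewrite mem_undup map_f // mem_cat tg orbT.
- by move=> t tf; rewrite mem_undup map_f // mem_cat tf.
Qed.

Lemma Phi_scale n k (f : elt n) : Phi (scaleA k f) = k * Phi f.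
Proof. by rewrite /Phi big_map mulr_sumr; apply: eq_bigr => t _; rewrite mulrA. Qed.
Lemma Phi_flatten n (L : seq (elt n)) : Phi (flatten L) = \sum_(f <- L) Phi f.
Proof. by rewrite /Phi big_flatten. Qed.
Lemma Phi_d2 n (f : elt n) : Phi (d2 f) = \sum_(u <- f) u.1 * Phi (d2_mono u.2).
Proof. by rewrite /d2 Phi_flatten big_map; apply: eq_bigr => u _; rewrite Phi_scale. Qed.
Lemma Dg1 n (e : {ffun 'I_n -> nat}) : Dg e = 1%N -> exists i, e = delta i.
Proof.
rewrite /Dg /wsum => h.
have [/existsP[k kp]|none] := boolP [exists k, 0 < e k]%N.
  exists k; move: h; rewrite (bigD1 k) //= muln1 => h.
  have ek : e k = 1%N by apply/eqP; rewrite eqn_leq kp andbT -h leq_addr.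
  have rest : (\sum_(i < n | i != k) e i * 1 = 0)%N by move: h; rewrite ek => /eqP; rewrite -{2}(addn0 1%N) eqn_add2l => /eqP.
  apply/ffunP => i; rewrite ffunE; case: eqP => [->//|/eqP ne].
  move/eqP: rest; rewrite sum_nat_eq0 => /forall_inP/(_ i ne).
  by rewrite muln1 => /eqP.
exfalso; move: h; rewrite big1 // => i _.
by move/existsPn: none => /(_ i); rewrite lt0n negbK muln1 => /eqP.
Qed.
Lemma pt (n i j a : nat) : (4 < n)%N -> (i < n)%N -> (j < n)%N -> (a <= j)%N ->
 psi' n ((i==0)+(a==0)+(j-a==0))%N ((i==1)+(a==1)+(j-a==1))%N 3 (i+a+(j-a))%N =
 if (i + j == n)%N then ((i==1) + (a==1) + (a.+1==j))%N%:Z - ((a==0)+(a==j))%N%:Z else 0.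
Proof.
move=> n4 ilt jlt aj.
have -> : (i + a + (j - a) = i + j)%N by lia.
rewrite /psi' eqxx /=.
case: eqP => [ij|//].
have -> : (j - a == 0)%N = (a == j) by apply/eqP/eqP; lia.
have -> : (j - a == 1)%N = (a.+1 == j) by apply/eqP/eqP; lia.
have -> : (i == 0)%N = false by apply/eqP; lia.
case: (a =P 0%N) => h0; case: (a =P j) => hj; case: (i =P 1%N) => hi;
 case: (a =P 1%N) => h1; case: (a.+1 =P j) => h2 //=; try lia.
Qed.
Lemma sum_ind_nat N c : (\sum_(0 <= a < N) nat_of_bool (a == c) = nat_of_bool (c < N))%N.
Proof.
elim: N => [|N IH]; first by rewrite big_geq.
rewrite big_nat_recr //= IH.
case: (ltngtP c N) => h.
- by rewrite ltnS (ltnW h).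
- by rewrite ltnS leqNgt h.
- by rewrite h ltnSn.
Qed.

Lemma Posz_sum (r : seq nat) (F : nat -> nat) :
  ((\sum_(a <- r) F a)%N)%:Z = \sum_(a <- r) (F a)%:Z.
Proof. by apply: (big_morph Posz PoszD). Qed.

Lemma psi_inc n (i a b : 'I_n) : psi (incx (incx (delta i) a) b, set0) =
  psi' n ((i==0 :> nat)+(a==0 :> nat)+(b==0 :> nat))%N ((i==1 :> nat)+(a==1 :> nat)+(b==1 :> nat))%N 3 (i+a+b)%N.
Proof.
by rewrite /psi eqxx /cnt /Dg /Wt !wsum_incx !wsum_delta.
Qed.

Lemma slice n (i j : 'I_n) : (4 < n)%N ->
  \sum_(a <- [seq a : 'I_n <- enum 'I_n | (a <= j)%N]) psi (incx (incx (delta i) a) (ord_subr j a), set0)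
  = if (i == 1%N :> nat) && (i + j == n)%N then n%:Z else 0.
Proof.
move=> n4.
rewrite big_filter big_enum_cond /=.
under eq_bigr => a _ do rewrite psi_inc /=.
have ilt := ltn_ord i; have jlt := ltn_ord j.
move: (val i) (val j) ilt jlt => {}i {}j ilt jlt.
pose G (a : nat) := psi' n ((i==0)+(a==0)+(j-a==0))%N ((i==1)+(a==1)+(j-a==1))%N 3 (i+a+(j-a))%N.
rewrite (eq_bigr (fun a : 'I_n => G a)) //.
rewrite -(big_mkord (fun a => a <= j)%N G).
rewrite (eq_bigl (fun a => a < j.+1)%N) //.
rewrite -(big_nat_widen 0 j.+1 n (fun _ => true)) //.
rewrite big_nat_cond.
rewrite (eq_bigr (fun a => if (i + j == n)%N then ((i==1) + (a==1) + (a.+1==j))%N%:Z - ((a==0)+(a==j))%N%:Z else 0)); last first.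
  move=> a; rewrite andbT ltnS => aj; exact: pt.
rewrite -big_nat_cond.
case: eqP => ij; last by rewrite andbF big1.
rewrite andbT sumrB -!Posz_sum !big_split /= !sum_ind_nat ltnSn.
have j1 : (0 < j)%N by lia.
have -> : (\sum_(0 <= a < j.+1) nat_of_bool (a.+1 == j) = 1)%N.
  rewrite (eq_bigr (fun a => nat_of_bool (a == j.-1))) ?sum_ind_nat; last by move=> a _; congr nat_of_bool; apply/eqP/eqP; lia.
  by rewrite ltnS leq_pred.
rewrite ltnS j1 (eq_bigr (fun _ => nat_of_bool (i == 1%N))) // sum_nat_const_nat subn0.
case: (i =P 1%N) => i1 /=; last by rewrite muln0.
have -> : (j.+1 = n)%N by lia.
by rewrite muln1 -addnA PoszD addrK.
Qed.

Lemma Phi_map n (A : Type) (s : seq A) (c : A -> int) (M : A -> mono n) :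
  Phi [seq (c x, M x) | x <- s] = \sum_(x <- s) c x * psi (M x).
Proof. by rewrite /Phi big_map. Qed.

Lemma psi_inc2 n (e : {ffun 'I_n -> nat}) (a b : 'I_n) : psi (incx (incx e a) b, set0) =
  psi' n (cnt e 0 + (a==0 :> nat)+(b==0 :> nat))%N (cnt e 1 + (a==1 :> nat)+(b==1 :> nat))%N
    (Dg e + 1 + 1)%N (Wt e + a + b)%N.
Proof. by rewrite /psi eqxx /cnt /Dg /Wt !wsum_incx. Qed.

Lemma Phi_d2_mono_dvd n (m : mono n) : (4 < n)%N -> (n %| Phi (d2_mono m))%Z.
Proof.
move=> n4; rewrite /d2_mono Phi_flatten big_map.
apply: rpred_sum => j _.
rewrite Phi_map /= -mulr_sumr; apply: dvdz_mull.
case: (m.2 :\ j =P set0) => hS; last first.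
  by rewrite big1 ?dvdz0 // => a _; rewrite /psi /=; case: eqP.
rewrite hS.
case: (Dg m.1 =P 1%N) => hD; last first.
  rewrite big1 ?dvdz0 // => a _; rewrite psi_inc2 /psi'.
  by have -> : (Dg m.1 + 1 + 1 == 3)%N = false by apply/eqP; lia.
have [i ->] := Dg1 hD.
rewrite slice //; case: ifP => _; [exact: dvdzz | exact: dvdz0].
Qed.

Lemma Phi_d2_delta n (i j : 'I_n) : (4 < n)%N ->
  Phi (d2_mono (delta i, [set j])) = if (i == 1%N :> nat) && (i + j == n)%N then n%:Z else 0.
Proof.
move=> n4; rewrite /d2_mono /= enum_set1 /= cats0 Phi_map.
have -> : #|[set s in [set j] | (s < j)%N]| = 0%N.
  apply/eqP; rewrite cards_eq0; apply/eqP/setP => s; rewrite !inE.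
  by case: eqP => // ->; rewrite ltnn.
rewrite expr0.
under eq_bigr => a _ do rewrite mul1r setDv.
exact: slice.
Qed.

Definition M3 n (i a b : 'I_n) : mono n := (incx (incx (delta i) a) b, set0).
Definition trip n := [seq t : 'I_n * 'I_n * 'I_n <- enum {: 'I_n * 'I_n * 'I_n} | (nat_of_ord t.1.1 + nat_of_ord t.1.2 + nat_of_ord t.2 == n)%N].
Definition T n : elt n := [seq (1, M3 t.1.1 t.1.2 t.2) | t <- trip n].
Definition jof n (i : 'I_n.+1) : 'I_n.+1 := inord (n.+1 - i).
Definition wB n : elt n.+1 := [seq ((3 * i)%N%:Z, (delta i, [set jof i])) | i : 'I_n.+1 <- enum 'I_n.+1].

Lemma M3C1 n (i a b : 'I_n) : M3 a i b = M3 i a b.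
Proof.
by rewrite /M3; congr (_, _); apply/ffunP => k; rewrite !ffunE; lia.
Qed.
Lemma M3C2 n (i a b : 'I_n) : M3 b a i = M3 i a b.
Proof.
by rewrite /M3; congr (_, _); apply/ffunP => k; rewrite !ffunE; lia.
Qed.

Lemma coef_map n (A : Type) (s : seq A) (c : A -> int) (M : A -> mono n) m :
  coef [seq (c x, M x) | x <- s] m = \sum_(x <- s) (if M x == m then c x else 0).
Proof. by rewrite /coef big_map. Qed.

Lemma Phi_wB n : (3 < n)%N -> Phi (d2 (wB n)) = (3 * n.+1)%N%:Z.
Proof.
move=> n3; rewrite Phi_d2 /wB big_map big_enum /=.
have i1 : (1 < n.+1)%N by lia.
rewrite (bigD1 (inord 1)) //= Phi_d2_delta ?ltnS // /jof !inordK //; last by lia.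
rewrite eqxx /= big1 ?addr0.
  by have -> : (1 + (n.+1 - 1) == n.+1)%N by apply/eqP; lia.
move=> i ne; rewrite Phi_d2_delta ?ltnS //.
have -> : (val i == 1%N) = false.
  apply/negbTE; apply: contra ne => /eqP h; apply/eqP/val_inj; rewrite /= inordK //.
by rewrite /= mulr0.
Qed.

Lemma coef_d2_delta n (i j : 'I_n) m :
  coef (d2_mono (delta i, [set j])) m =
  \sum_(a < n | (a <= j)%N) (if M3 i a (ord_subr j a) == m then 1 else 0).
Proof.
rewrite /d2_mono /= enum_set1 /= cats0 coef_map.
have -> : #|[set s in [set j] | (s < j)%N]| = 0%N.
  apply/eqP; rewrite cards_eq0; apply/eqP/setP => s; rewrite !inE.
  by case: eqP => // ->; rewrite ltnn.
rewrite expr0 big_filter big_enum_cond /=.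
by apply: eq_bigr => a _; rewrite setDv.
Qed.

Lemma triple_sum N (G : 'I_N * 'I_N * 'I_N -> int) :
  \sum_t G t = \sum_(i < N) \sum_(a < N) \sum_(b < N) G ((i, a), b).
Proof.
transitivity (\sum_(p : 'I_N * 'I_N) \sum_(b < N) G (p,b)).
  by rewrite (pair_big xpredT xpredT (fun p b => G (p,b))) /=; apply: eq_bigr => [[p b]].
rewrite (pair_big xpredT xpredT (fun i a => \sum_(b < N) G ((i,a),b))) /=.
by apply: eq_bigr => [[i a]].
Qed.

Lemma bsum n (i a : 'I_n.+1) (F : 'I_n.+1 -> int) :
  \sum_(b < n.+1) (if (i + a + b == n.+1)%N then (nat_of_ord i)%:Z * F b else 0)
  = if (a <= jof i)%N then (nat_of_ord i)%:Z * F (ord_subr (jof i) a) else 0.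
Proof.
case: (nat_of_ord i =P 0%N) => [->|i0].
  by rewrite big1 => [|b _]; case: ifP; rewrite ?mul0r.
have vj : nat_of_ord (jof i) = (n.+1 - i)%N by rewrite /jof inordK //; lia.
have ilt := ltn_ord i.
case: leqP => aj.
  rewrite (bigD1 (ord_subr (jof i) a)) //= vj.
  have -> : (i + a + (n.+1 - i - a) == n.+1)%N by apply/eqP; lia.
  rewrite big1 ?addr0 // => b nb.
  have -> : (i + a + b == n.+1)%N = false => //.
  apply/negbTE; apply: contra nb => /eqP h; apply/eqP/val_inj => /=; rewrite vj; lia.
rewrite big1 // => b _.
have -> : (i + a + b == n.+1)%N = false => //.
apply/negbTE/eqP => h; move: aj; rewrite vj; lia.
Qed.

Lemma bnd n : (3 < n)%N -> eqA (d2 (wB n)) (scaleA (n.+1)%:Z (T n.+1)).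
Proof.
move=> n3 m.
pose chi (t : 'I_n.+1 * 'I_n.+1 * 'I_n.+1) : int := if M3 t.1.1 t.1.2 t.2 == m then 1 else 0.
pose P (t : 'I_n.+1 * 'I_n.+1 * 'I_n.+1) := (nat_of_ord t.1.1 + nat_of_ord t.1.2 + nat_of_ord t.2 == n.+1)%N.
have cT : coef (T n.+1) m = \sum_t (if P t then chi t else 0).
  by rewrite /T coef_map /trip big_filter big_enum_cond big_mkcond /=.
pose sg (t : 'I_n.+1 * 'I_n.+1 * 'I_n.+1) := ((t.1.2, t.1.1), t.2).
pose tu (t : 'I_n.+1 * 'I_n.+1 * 'I_n.+1) := ((t.2, t.1.2), t.1.1).
have sginj : injective sg by apply: (@inv_inj _ sg) => [[[i a] b]].
have tuinj : injective tu by apply: (@inv_inj _ tu) => [[[i a] b]].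
have sym1 : \sum_t (if P t then (nat_of_ord t.1.2)%:Z * chi t else 0)
          = \sum_t (if P t then (nat_of_ord t.1.1)%:Z * chi t else 0).
  rewrite (reindex_inj sginj); apply: eq_bigr => [[[i a] b]] _.
  by rewrite /P /chi /sg /= M3C1 (addnC a i).
have sym2 : \sum_t (if P t then (nat_of_ord t.2)%:Z * chi t else 0)
          = \sum_t (if P t then (nat_of_ord t.1.1)%:Z * chi t else 0).
  rewrite (reindex_inj tuinj); apply: eq_bigr => [[[i a] b]] _.
  by rewrite /P /chi /tu /= M3C2; congr (if _ then _ else _); apply/eqP/eqP; lia.
rewrite coef_scale cT mulr_sumr.
have key : forall t, (n.+1)%:Z * (if P t then chi t else 0) =
   (if P t then (nat_of_ord t.1.1)%:Z * chi t else 0) +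
   (if P t then (nat_of_ord t.1.2)%:Z * chi t else 0) +
   (if P t then (nat_of_ord t.2)%:Z * chi t else 0).
  move=> t; rewrite /P; case: eqP => h; last by rewrite !addr0 mulr0.
  by rewrite -!mulrDl -!PoszD h.
rewrite (eq_bigr _ (fun t _ => key t)) !big_split /= sym1 sym2.
rewrite coef_d2 /wB big_map big_enum /= triple_sum.
have hS : \sum_(i < n.+1) \sum_(a < n.+1) \sum_(b < n.+1)
           (if P (i, a, b) then (nat_of_ord (i, a, b).1.1)%:Z * chi (i, a, b) else 0)
  = \sum_(i < n.+1) \sum_(a < n.+1) (if (a <= jof i)%N then (nat_of_ord i)%:Z * chi (i, a, ord_subr (jof i) a) else 0).
  apply: eq_bigr => i _; apply: eq_bigr => a _.
  exact: (bsum i a (fun b => chi (i, a, b))).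
rewrite hS -!big_split /=; apply: eq_bigr => i _.
rewrite coef_d2_delta mulr_sumr -!big_split big_mkcond /=; apply: eq_bigr => a _.
case: ifP => _; last by rewrite !addr0.
have -> : (3 * i)%N = (i + i + i)%N by lia.
by rewrite !PoszD !mulrDl.
Qed.

Lemma T_cycle n : is_cycle (T n).
Proof.
move=> m; rewrite coef_d2 /coef big_nil big1_seq // => u /andP[_ /mapP[t _ ->]] /=.
by rewrite /d2_mono /= enum_set0 /= big_nil mulr0.
Qed.

Lemma qdeg_e n (e : {ffun 'I_n -> nat}) : qdeg (e, set0) = wsum e (fun k => 2 * k + 2)%N.
Proof. by rewrite /qdeg /= big_set0 addn0. Qed.
Lemma tdeg_e n (e : {ffun 'I_n -> nat}) : tdeg (e, set0) = wsum e (fun k => 2 * k)%N.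
Proof. by rewrite /tdeg /= big_set0 addn0. Qed.

Lemma T_homog n : homog (2 * n + 6) (2 * n) (T n).
Proof.
apply/allP => u /mapP[t]; rewrite mem_filter => /andP[/eqP ht _] -> /=.
rewrite /M3 qdeg_e tdeg_e !wsum_incx !wsum_delta; apply/andP; split; apply/eqP; lia.
Qed.

Theorem mainTheorem2 (p : nat) (hp : prime p) (hp3 : (3 < p)%N) :
  exists z : elt p,
    [/\ homog (2 * p + 6) (2 * p) z, is_cycle z &
        forall k : nat, is_boundary (scaleA (k%:Z) z) <-> (p %| k)%N].
Proof.
case: p hp hp3 => [//|n] hp hp3.
have n3 : (3 < n)%N.
  case: (n =P 3%N) => [e|ne]; first by rewrite e in hp.
  lia.
exists (T n.+1); split; [exact: T_homog | exact: T_cycle |] => k.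
have PhiT : Phi (T n.+1) = 3.
  have := Phi_wB n3; rewrite (eqA_Phi (bnd n3)) Phi_scale => h.
  apply: (@mulfI _ (n.+1)%:Z) => //; rewrite h; lia.
split.
  case=> w hw.
  have := eqA_Phi hw; rewrite Phi_scale PhiT Phi_d2 => h.
  have : ((n.+1)%:Z %| (k%:Z * 3))%Z.
    rewrite -h; apply: rpred_sum => u _; apply: dvdz_mull; apply: Phi_d2_mono_dvd; lia.
  rewrite -PoszM dvdzE /= (Euclid_dvdM _ _ hp) => /orP[//|].
  by move/(dvdn_leq (isT : (0 < 3)%N)); lia.
case/dvdnP => q ->.
exists (scaleA q%:Z (wB n)) => m.
rewrite coef_d2 /scaleA big_map /=.
under eq_bigr => u _ do rewrite -mulrA.
rewrite -mulr_sumr -coef_d2 (bnd n3) !coef_scale mulrA PoszM.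
by [].
Qed.
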